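(* Let $f:2^{[n]}\to\mathbb{Z}$ be an integer-valued submodular function with $f(\emptyset)=0$ and $|f(S)|\le M$ for all $S\subseteq[n]$. Then for every $x\in[0,1]^n$, the Lovász subgradient $g(x)$ has at most $3M$ nonzero entries.
   Context: Notation: $[n]=\{1,\dots,n\}$. For a permutation $P=(P_1,\dots,P_n)$ of $[n]$, write $P[j]=\{P_1,\dots,P_j\}$ for $0\le j\le n$ (so $P[0]=\emptyset$). For $x\in\mathbb{R}^n$, the permutation $P_x$ consistent with $x$ is the permutation with $x_{P_1}\ge x_{P_2}\ge\dots\ge x_{P_n}$, ties broken lexicographically. The Lovász subgradient at $x$ is $g(x)\in\mathbb{R}^n$ with $g(x)_{P_k}=f(P[k])-f(P[k-1])$ for $k\in[n]$, where $P=P_x$. *)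

(* Defs.v *)
From HB Require Import structures.
From mathcomp Require Import all_boot all_order all_algebra.
Set Implicit Arguments. Unset Strict Implicit. Unset Printing Implicit Defensive.
Import Order.TTheory GRing.Theory Num.Theory.
Local Open Scope ring_scope.

Definition submodular (n : nat) (f : {set 'I_n} -> int) : Prop :=
  forall A B : {set 'I_n}, f (A :|: B) + f (A :&: B) <= f A + f B.

Definition consistent_rel (R : realFieldType) (n : nat) (x : 'I_n -> R)
  : rel 'I_n := fun i j => (x j < x i) || ((x i == x j) && (i <= j)%N).

Definition perm_of (R : realFieldType) (n : nat) (x : 'I_n -> R) : seq 'I_n :=
  sort (consistent_rel x) (enum 'I_n).

Definition prefix_set (n : nat) (P : seq 'I_n) (j : nat) : {set 'I_n} :=
  [set i in take j P].

(* Lovász subgradient: g(x)_{P_k} = f(P[k]) - f(P[k-1]).  If i = P_k then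
   index i P = k-1 (0-based). *)
Definition lovasz_subgrad (R : realFieldType) (n : nat) (f : {set 'I_n} -> int)
  (x : 'I_n -> R) (i : 'I_n) : int :=
  let P := perm_of x in
  f (prefix_set P (index i P).+1) - f (prefix_set P (index i P)).

(* Main.v *)
Require Import Defs.
From HB Require Import structures.
From mathcomp Require Import all_boot all_order all_algebra.
From mathcomp Require Import lra zify.
Import Order.TTheory GRing.Theory Num.Theory.
Local Open Scope ring_scope.

Section Aux.
Variables (n : nat) (f : {set 'I_n} -> int) (P : seq 'I_n).
Hypothesis hsub : submodular f.
Hypothesis uP : uniq P.

Definition gs (i : 'I_n) : int :=
  f (prefix_set P (index i P).+1) - f (prefix_set P (index i P)).

Lemma prefix_rcons k (y : 'I_n) (hk : (k < size P)%N) :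
  prefix_set P k.+1 = y |: prefix_set P k -> True.
Proof. by []. Qed.

Lemma telesc k : (k <= size P)%N ->
  (\sum_(i <- take k P) gs i = f (prefix_set P k) - f set0) /\
  (forall T : {set 'I_n},
     \sum_(i <- take k P | i \in T) gs i <= f (T :&: prefix_set P k) - f set0).
Proof.
elim: k => [|k IH] hk.
  have E : prefix_set P 0 = set0 by apply/setP => z; rewrite !inE take0.
  rewrite take0 E; split; first by rewrite big_nil subrr.
  by move=> T; rewrite big_nil setI0 subrr.
have hk' : (k < size P)%N by [].
case: IH; first exact: ltnW.
move=> IH1 IH2.
have x0 : 'I_n by move: hk'; case: (P) => [|a s] // _; exact: a.
set y := nth x0 P k.
have Ht : take k.+1 P = rcons (take k P) y by rewrite (take_nth x0).
have Hpre : prefix_set P k.+1 = y |: prefix_set P k.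
  by apply/setP => z; rewrite /prefix_set Ht !inE mem_rcons in_cons.
have Hy : y \notin prefix_set P k.
  have := take_uniq k.+1 uP; rewrite Ht rcons_uniq => /andP[h _].
  by rewrite inE.
have Hg : gs y = f (prefix_set P k.+1) - f (prefix_set P k).
  by rewrite /gs /y index_uniq.
split.
  rewrite Ht big_rcons /= IH1 Hg; lra.
move=> T; rewrite Ht big_rcons /=.
case: ifP => yT; last first.
  rewrite addr0 Hpre setIUr.
  have -> : T :&: [set y] = set0.
    apply/setP => z; rewrite !inE; apply/negbTE/andP => -[zT /eqP zy].
    by rewrite -zy zT in yT.
  by rewrite set0U.
apply: le_trans (lerD (IH2 T) (lexx (gs y))) _.
have HS := hsub (y |: (T :&: prefix_set P k)) (prefix_set P k).
have E1 : (y |: (T :&: prefix_set P k)) :|: prefix_set P k = prefix_set P k.+1.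
  rewrite Hpre; apply/setP => z; rewrite !(in_setU, in_setI, in_set1).
  by case: (z == y); case: (z \in T); case: (z \in prefix_set P k).
have E2 : (y |: (T :&: prefix_set P k)) :&: prefix_set P k = T :&: prefix_set P k.
  apply/setP => z; rewrite !(in_setU, in_setI, in_set1).
  case: (eqVneq z y) => [->|_]; last by case: (z \in T); case: (z \in prefix_set P k).
  by rewrite (negbTE Hy) !andbF.
have E3 : T :&: prefix_set P k.+1 = y |: (T :&: prefix_set P k).
  rewrite Hpre; apply/setP => z; rewrite !(in_setU, in_setI, in_set1).
  case: (eqVneq z y) => [->|_]; last by case: (z \in T); case: (z \in prefix_set P k).
  by rewrite yT.
rewrite E1 E2 in HS; rewrite E3 Hg; lra.
Qed.

End Aux.

Theorem lemma3p6 (R : realFieldType) (n : nat) (f : {set 'I_n} -> int) (M : R)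
  (hsub : submodular f) (h0 : f set0 = 0)
  (hM : forall S : {set 'I_n}, `|(f S)%:~R| <= M)
  (x : 'I_n -> R) (hx : forall i, 0 <= x i <= 1) :
  (#|[set i | lovasz_subgrad f x i != 0]|)%:R <= 3 * M.
Proof.
set P := perm_of x.
have uP : uniq P by rewrite sort_uniq enum_uniq.
have sP : size P = n by rewrite size_sort size_enum_ord.
have pP : perm_eq P (enum 'I_n) by rewrite perm_sort.
have Hg : forall i, lovasz_subgrad f x i = @gs n f P i by [].
have [A B] := @telesc n f P hsub uP _ (leqnn (size P)).
have Hall : prefix_set P (size P) = setT.
  apply/setP => z; rewrite /prefix_set take_size !inE.
  by rewrite (perm_mem pP) mem_enum.
rewrite take_size Hall h0 subr0 in A.
set T := [set i | 0 < @gs n f P i].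
have BT := B T; rewrite take_size Hall setIT h0 subr0 in BT.
rewrite (perm_big _ pP) big_enum /= in A.
rewrite (perm_big _ pP) big_enum_cond /= in BT.
have key : (#|[set i | lovasz_subgrad f x i != 0]|)%:Z <= 2 * f T - f setT.
  have C : (#|[set i | lovasz_subgrad f x i != 0]|)%:Z =
      \sum_(i : 'I_n) (if @gs n f P i != 0 then 1 else 0).
    rewrite -big_mkcond /= -sum1_card /=.
    rewrite (@big_morph _ _ Posz 0 (fun a b => a + b) 0 +%R) //.
    by apply: eq_bigl => i; rewrite inE Hg.
  rewrite C.
  have D : \sum_(i : 'I_n)
      (2 * (if 0 < @gs n f P i then @gs n f P i else 0) - @gs n f P i)
      = 2 * (\sum_(i in 'I_n | i \in T) @gs n f P i) - f setT.
    rewrite sumrB -mulr_sumr -A; congr (2 * _ - _).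
    rewrite [RHS]big_mkcond /=; apply: eq_bigr => i _; by rewrite inE.
  apply: (@le_trans _ _ (\sum_(i : 'I_n)
      (2 * (if 0 < @gs n f P i then @gs n f P i else 0) - @gs n f P i))).
    apply: ler_sum => i _.
    have [h|h|h] := ltgtP (@gs n f P i) 0.
    - rewrite /=; lia.
    - rewrite /=; lia.
    - by rewrite h.
  rewrite D; lra.
have fT : (f T)%:~R <= M :> R by apply: le_trans (hM T); apply: ler_norm.
have fS : - (f setT)%:~R <= M :> R by apply: le_trans (hM setT); rewrite -normrN; apply: ler_norm.
have := key; rewrite -(ler_int R) natz => K.
apply: le_trans K _.
rewrite intrB intrM /=; lra.
Qed.
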